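(* Let $f_1,\dots,f_n:\mathbb{R}^d\to\mathbb{R}$ be such that each $f_i$ is $L_i$-smooth and has a minimizer $x_i$. Let $\alpha_1,\dots,\alpha_n\in(0,1)$ and $\tilde f(x) = \frac{1}{n}\sum_{i=1}^n f_i(\alpha_i x + (1-\alpha_i)x_i)$. Let $\hat L = \frac{1}{n}\sum_{i=1}^n L_i$, $L_\alpha = \frac{1}{n}\sum_{i=1}^n \alpha_i^2 L_i$, $w_i = \frac{\alpha_i^2 L_i}{n L_\alpha}$, $x^{\mathrm{avg}} = \sum_{i=1}^n w_i x_i$, and $D = \max_{i\neq j}\|x_i - x_j\|^2$. Fix $\epsilon>0$ and assume that either $\max_{i} \alpha_i \leq \sqrt{2\epsilon}/\sqrt{\hat L D}$, or $\alpha_i = \beta$ for all $i$ with $\beta \leq \sqrt{2\epsilon}/\sqrt{\hat L D}$. Then $x^{\mathrm{avg}}$ is an $\epsilon$-approximate minimizer of $\tilde f$, i.e. $\tilde f(x^{\mathrm{avg}}) - \inf_{x\in\mathbb{R}^d}\tilde f(x) \leq \epsilon$.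
   Context: A differentiable function $g$ is $L$-smooth if $\|\nabla g(x) - \nabla g(y)\| \leq L\|x-y\|$ for all $x,y$. *)

(* Defs.v *)
From HB Require Import structures.
From mathcomp Require Import all_boot all_order all_algebra.
From mathcomp Require Import all_classical all_reals all_analysis.
Set Implicit Arguments. Unset Strict Implicit. Unset Printing Implicit Defensive.
Import Order.TTheory GRing.Theory Num.Theory.
Import numFieldNormedType.Exports.
Local Open Scope ring_scope.

Section Defs.
Variables (R : realType) (d : nat).

Definition dotv (u v : 'rV[R]_d) : R := \sum_(k < d) u ord0 k * v ord0 k.
Definition enorm (u : 'rV[R]_d) : R := Num.sqrt (dotv u u).

Definition is_gradient (f : 'rV[R]_d -> R) (g : 'rV[R]_d -> 'rV[R]_d) : Prop :=
  forall x, differentiable f x /\ forall v, ('d f x) v = dotv (g x) v.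

Definition L_smooth (f : 'rV[R]_d -> R) (L : R) : Prop :=
  exists g, is_gradient f g /\
    forall x y, enorm (g x - g y) <= L * enorm (x - y).

Definition is_minimizer (f : 'rV[R]_d -> R) (x : 'rV[R]_d) : Prop :=
  forall y, f x <= f y.

Variables (n : nat) (f : 'I_n -> 'rV[R]_d -> R) (L : 'I_n -> R)
  (xs : 'I_n -> 'rV[R]_d) (alpha : 'I_n -> R).

Definition ftilde (x : 'rV[R]_d) : R :=
  n%:R^-1 * \sum_(i < n) f i (alpha i *: x + (1 - alpha i) *: xs i).
Definition Lhat : R := n%:R^-1 * \sum_(i < n) L i.
Definition Lalpha : R := n%:R^-1 * \sum_(i < n) alpha i ^+ 2 * L i.
Definition wgt (i : 'I_n) : R := alpha i ^+ 2 * L i / (n%:R * Lalpha).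
Definition xavg : 'rV[R]_d := \sum_(i < n) wgt i *: xs i.
Definition Dmax : R :=
  \big[Num.max/0]_(i < n) \big[Num.max/0]_(j < n | i != j) enorm (xs i - xs j) ^+ 2.
Definition alpha_max : R := \big[Num.max/0]_(i < n) alpha i.
End Defs.

(* Main.v *)
Set Warnings "-notation-overridden,-ambiguous-paths,-notation-incompatible-prefix".
Require Import Defs.
From HB Require Import structures.
From mathcomp Require Import all_boot all_order all_algebra.
From mathcomp Require Import all_classical all_reals all_analysis.
From mathcomp Require Import ring lra.
Set Implicit Arguments. Unset Strict Implicit. Unset Printing Implicit Defensive.
Import Order.TTheory GRing.Theory Num.Theory.
Import numFieldNormedType.Exports.
Local Open Scope ring_scope.

Section Aux.
Variables (R : realType) (d : nat).
Implicit Types (u v w : 'rV[R]_d).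

Lemma dotvDl u v w : dotv (u + v) w = dotv u w + dotv v w.
Proof. by rewrite /dotv -big_split; apply: eq_bigr => k _; rewrite mxE mulrDl. Qed.
Lemma dotvZl (a : R) u w : dotv (a *: u) w = a * dotv u w.
Proof. by rewrite /dotv mulr_sumr; apply: eq_bigr => k _; rewrite mxE mulrA. Qed.
Lemma dotvNl u w : dotv (- u) w = - dotv u w.
Proof. by rewrite -scaleN1r dotvZl mulN1r. Qed.
Lemma dotvBl u v w : dotv (u - v) w = dotv u w - dotv v w.
Proof. by rewrite dotvDl dotvNl. Qed.
Lemma dotvC u v : dotv u v = dotv v u.
Proof. by rewrite /dotv; apply: eq_bigr => k _; rewrite mulrC. Qed.
Lemma dotv_ge0 u : 0 <= dotv u u.
Proof. by apply: sumr_ge0 => k _; rewrite -expr2 sqr_ge0. Qed.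
Lemma enorm_sq u : enorm u ^+ 2 = dotv u u.
Proof. by rewrite /enorm sqr_sqrtr // dotv_ge0. Qed.

Lemma enormZ (a : R) u : enorm (a *: u) = `|a| * enorm u.
Proof.
rewrite /enorm dotvZl dotvC dotvZl mulrA -expr2 sqrtrM ?sqr_ge0 //.
by rewrite sqrtr_sqr.
Qed.

Lemma young u v (r : R) : 0 < r -> 2 * dotv u v <= r * dotv u u + r^-1 * dotv v v.
Proof.
move=> r0.
have H := dotv_ge0 (r *: u - v).
have E : dotv (r *: u - v) (r *: u - v) = r^+2 * dotv u u - 2 * r * dotv u v + dotv v v.
  rewrite /dotv !mulr_sumr -sumrB -big_split /=; apply: eq_bigr => k _.
  rewrite !mxE; ring.
rewrite E in H.
rewrite -(ler_pM2l r0) mulrDr mulVKf ?gt_eqF //.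
rewrite expr2 in H; nra.
Qed.

Lemma cs_bound u v (K : R) : 0 < K -> enorm u <= K * enorm v -> dotv u v <= K * dotv v v.
Proof.
move=> K0 hu.
have h2 : dotv u u <= K^+2 * dotv v v.
  have hn : 0 <= enorm u by exact: sqrtr_ge0.
  rewrite -!enorm_sq -exprMn !expr2; nra.
have Ki : 0 < K^-1 by rewrite invr_gt0.
have := young u v Ki; rewrite invrK.
have : K^-1 * dotv u u <= K * dotv v v.
  rewrite ler_pdivrMl // mulrA -expr2 //.
lra.
Qed.


Lemma phi_der (f : 'rV[R]_d -> R) (x v : 'rV[R]_d) (t : R) :
  differentiable f (x + t *: v) ->
  derivable (fun s : R => f (x + s *: v)) t 1 /\
  'D_1 (fun s : R => f (x + s *: v)) t = 'd f (x + t *: v) v.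
Proof.
move=> df.
have E : (fun h : R => h^-1 *: (((fun s : R => f (x + s *: v)) \o shift t) (h *: 1) - f (x + t *: v)))
  = (fun h : R => h^-1 *: ((f \o shift (x + t *: v)) (h *: v) - f (x + t *: v))).
  apply/funext => h /=; congr (_ *: (f _ - _)).
  by rewrite [h%:A]mulr1 scalerDl addrCA addrA.
split; first by rewrite /derivable E; exact: diff_derivable.
by rewrite /derive E -deriveE.
Qed.

Lemma descent (f : 'rV[R]_d -> R) (g : 'rV[R]_d -> 'rV[R]_d) (L : R) x v :
  is_gradient f g -> (forall x y, enorm (g x - g y) <= L * enorm (x - y)) -> 0 < L ->
  is_minimizer f x -> f (x + v) <= f x + L / 2 * dotv v v.
Proof.
move=> hg hL L0 hmin.
pose phi := fun s : R => f (x + s *: v).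
have Hphi : forall s : R, is_derive s (1:R) phi (dotv (g (x + s *: v)) v).
  move=> s; have [df dv] := hg (x + s *: v).
  have [h1 h2] := phi_der df.
  by split => //; rewrite h2 dv.
have g0 : dotv (g x) v = 0.
  have hd : forall t, t \in `]-1, 1[ -> derivable phi t 1.
    by move=> t _; have [] := Hphi t.
  have := @derive1_at_min R phi (-1) 1 0 (ltW (lt_trans (ltrN10 R) ltr01)) hd.
  rewrite in_itv /= ltrN10 ltr01 => /(_ isT) H.
  have H' : is_derive (0:R) (1:R) phi 0 by apply: H => t _; rewrite /phi scale0r addr0; exact: hmin.
  have e1 := @derive_val _ _ _ _ _ _ _ (Hphi 0).
  have e2 := @derive_val _ _ _ _ _ _ _ H'.
  by rewrite scale0r addr0 in e1; rewrite -e1 e2.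
pose c := L / 2 * dotv v v.
pose psi := fun s : R => phi s - c * (s * s).
have Hpsi : forall s : R, is_derive s (1:R) psi (dotv (g (x + s *: v)) v - c * (s + s)).
  move=> s.
  have -> : psi = phi - c \*: ((@id R) * (@id R)) by apply/funext => y.
  have HH := (is_deriveB (Hphi s) (is_deriveZ c (is_deriveM (is_derive_id s (1:R)) (is_derive_id s (1:R))))).
  by apply: is_derive_eq HH _; rewrite [s%:A]mulr1.
have hdpsi : forall s : R, derivable psi s 1 by move=> s; have [] := Hpsi s.
have hsign : forall s : R, s \in `]0, 1[ -> (psi^`() s <= 0)%classic.
  move=> s; rewrite in_itv /= => /andP [s0 s1].
  rewrite derive1E (@derive_val _ _ _ _ _ _ _ (Hpsi s)).
  have -> : dotv (g (x + s *: v)) v = dotv (g (x + s *: v) - g x) v by rewrite dotvBl g0 subr0.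
  have Ls : 0 < L * s by rewrite mulr_gt0.
  have := @cs_bound (g (x + s *: v) - g x) v (L * s) Ls.
  have := hL (x + s *: v) x.
  rewrite addrAC subrr add0r enormZ (gtr0_norm s0) mulrA => h1 /(_ h1).
  rewrite /c; lra.
have := @ler0_derive1_nincr R psi 0 1 (fun s _ => hdpsi s) hsign
  (derivable_within_continuous (fun s _ => hdpsi s)) 0 1 (lexx _) ler01 (lexx _).
rewrite /psi /phi !scale0r !addr0 scale1r !mulr0 !mulr1 subr0 /c.
lra.
Qed.

Lemma dotvZr (a : R) u w : dotv u (a *: w) = a * dotv u w.
Proof. by rewrite dotvC dotvZl dotvC. Qed.

Lemma jensen_sq n (w y : 'I_n -> R) : (forall j, 0 <= w j) -> \sum_j w j = 1 ->
  (\sum_j w j * y j) ^+ 2 <= \sum_j w j * y j ^+ 2.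
Proof.
move=> w0 w1.
have E : forall m, \sum_j w j * (y j - m) ^+ 2 =
   \sum_j w j * y j ^+ 2 - 2 * m * \sum_j w j * y j + m ^+ 2 * \sum_j w j.
  move=> m; rewrite !mulr_sumr -sumrB -big_split /=; apply: eq_bigr => j _; ring.
have H : 0 <= \sum_j w j * (y j - \sum_j w j * y j) ^+ 2.
  by apply: sumr_ge0 => j _; rewrite mulr_ge0 // sqr_ge0.
rewrite E w1 in H; set m := \sum_j w j * y j in H *; nra.
Qed.

Lemma jensen_vec n (w : 'I_n -> R) (u : 'I_n -> 'rV[R]_d) : (forall j, 0 <= w j) -> \sum_j w j = 1 ->
  dotv (\sum_j w j *: u j) (\sum_j w j *: u j) <= \sum_j w j * dotv (u j) (u j).
Proof.
move=> w0 w1.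
rewrite /dotv.
under [X in _ <= X]eq_bigr do rewrite mulr_sumr.
rewrite (exchange_big _ _ _ _ _ (fun j k => w j * (u j ord0 k * u j ord0 k))).
apply: ler_sum => k _.
rewrite !summxE.
have ee : forall j, (w j *: u j) ord0 k = w j * u j ord0 k.
  by move=> j; rewrite [LHS]mxE.
rewrite (eq_bigr _ (fun j _ => ee j)) -expr2.
under [X in _ <= X]eq_bigr do rewrite -expr2.
exact: (@jensen_sq n w (fun j => u j ord0 k)).
Qed.

End Aux.

Unset Implicit Arguments.

Theorem theorem1 (R : realType) (d n : nat) (f : 'I_n -> 'rV[R]_d -> R)
  (L : 'I_n -> R) (xs : 'I_n -> 'rV[R]_d) (alpha : 'I_n -> R) (eps : R) :
  (0 < n)%N ->
  (forall i, 0 < L i) ->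
  (forall i, L_smooth (f i) (L i)) ->
  (forall i, is_minimizer (f i) (xs i)) ->
  (forall i, 0 < alpha i < 1) ->
  0 < eps ->
  (alpha_max alpha <= Num.sqrt (2 * eps) / Num.sqrt (Lhat L * Dmax xs)
   \/ exists beta : R, (forall i, alpha i = beta) /\
        beta <= Num.sqrt (2 * eps) / Num.sqrt (Lhat L * Dmax xs)) ->
  ((ftilde f xs alpha (xavg L xs alpha))%:E
     - ereal_inf [set (ftilde f xs alpha x)%:E | x in [set: 'rV[R]_d]]
   <= eps%:E)%E.
Proof.
move=> n0 L0 hsm hmin ha e0 hB.
set B := Num.sqrt (2 * eps) / Num.sqrt (Lhat L * Dmax xs) in hB.
set D := Dmax xs.
have aB : forall i, alpha i <= B.
  case: hB => [hm i|[b [hb bB]] i]; last by rewrite hb.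
  apply: le_trans hm; rewrite /alpha_max.
  exact: (le_bigmax (0:R) alpha i).
have D0 : 0 <= D by rewrite /D /Dmax; exact: bigmax_ge_id.
have nR : (n%:R : R) != 0 by rewrite pnatr_eq0 -lt0n.
have nR0 : (0 : R) < n%:R by rewrite ltr0n.
pose i0 : 'I_n := Ordinal n0.
set S := \sum_(i < n) alpha i ^+ 2 * L i.
have S0 : 0 < S.
  rewrite /S (bigD1 i0) //=.
  have p : 0 < alpha i0 ^+ 2 * L i0.
    by rewrite mulr_gt0 ?exprn_gt0 //; case/andP: (ha i0).
  have q : 0 <= \sum_(i < n | i != i0) alpha i ^+ 2 * L i.
    by apply: sumr_ge0 => i _; rewrite mulr_ge0 ?sqr_ge0 ?ltW.
  lra.
have w0 : forall j, 0 <= wgt L alpha j.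
  move=> j; rewrite /wgt /Lalpha -/S mulVKf // divr_ge0 ?(ltW S0) //.
  by rewrite mulr_ge0 ?sqr_ge0 // ltW.
have w1 : \sum_j wgt L alpha j = 1.
  rewrite /wgt /Lalpha -/S mulVKf // -mulr_suml -/S divff //.
  by rewrite gt_eqF.
have hdist : forall i, dotv (xavg L xs alpha - xs i) (xavg L xs alpha - xs i) <= D.
  move=> i.
  have -> : xavg L xs alpha - xs i = \sum_j wgt L alpha j *: (xs j - xs i).
    rewrite /xavg.
    under [RHS]eq_bigr do rewrite scalerBr.
    by rewrite sumrB -scaler_suml w1 scale1r.
  apply: le_trans (jensen_vec _ w0 w1) _.
  have -> : D = \sum_j wgt L alpha j * D by rewrite -mulr_suml w1 mul1r.
  apply: ler_sum => j _; apply: ler_wpM2l => //.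
  have [->|ji] := eqVneq j i; first by rewrite subrr /dotv big1 // => k _; rewrite mxE mul0r.
  rewrite -enorm_sq /D /Dmax.
  apply: le_trans (le_bigmax (0:R) _ j).
  exact: (@le_bigmax_cond _ _ _ (0:R) i (fun k => j != k) (fun k => enorm (xs j - xs k) ^+ 2) ji).
have hterm : forall i, f i (alpha i *: xavg L xs alpha + (1 - alpha i) *: xs i)
    <= f i (xs i) + L i / 2 * (B ^+ 2 * D).
  move=> i; have [g [hg hL]] := hsm i.
  have := descent (alpha i *: (xavg L xs alpha - xs i)) hg hL (L0 i) (hmin i).
  have -> : xs i + alpha i *: (xavg L xs alpha - xs i)
      = alpha i *: xavg L xs alpha + (1 - alpha i) *: xs i.
    by rewrite scalerBr scalerBl scale1r addrC -addrA [- _ + _]addrC.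
  move=> H; apply: le_trans H _; rewrite lerD2l.
  rewrite (dotvZl (alpha i)) (dotvZr (alpha i)) [alpha i * (alpha i * _)]mulrA -expr2.
  apply: ler_wpM2l; first by rewrite divr_ge0 ?ltW.
  have a0 : 0 < alpha i by case/andP: (ha i).
  apply: le_trans (ler_wpM2l (sqr_ge0 _) (hdist i)) _.
  apply: ler_wpM2r => //.
  have := aB i; rewrite !expr2; nra.
have LH : 0 < Lhat L.
  rewrite /Lhat mulr_gt0 ?invr_gt0 //.
  apply: (lt_le_trans (L0 i0)); rewrite (bigD1 i0) //= lerDl.
  by apply: sumr_ge0 => i _; exact: ltW.
have hBD : B ^+ 2 * D * Lhat L <= 2 * eps.
  have -> : B ^+ 2 = 2 * eps / (Lhat L * D).
    rewrite /B expr_div_n sqr_sqrtr; last by rewrite mulr_ge0 // ltW.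
    by rewrite sqr_sqrtr // mulr_ge0 // ltW.
  have [->|PD] := eqVneq (Lhat L * D) 0; first by rewrite invr0 mulr0 !mul0r mulr_ge0 // ltW.
  by rewrite -mulrA [D * _]mulrC divfK // lexx.
set m := n%:R^-1 * \sum_i f i (xs i).
have hlow : (m%:E <= ereal_inf [set (ftilde f xs alpha x)%:E | x in [set: 'rV[R]_d]])%E.
  apply/ereal_infP => _ [x _ <-]; rewrite lee_fin /ftilde ler_wpM2l ?invr_ge0 ?ler0n //.
  by apply: ler_sum => i _; exact: hmin.
have hup : ftilde f xs alpha (xavg L xs alpha) <= m + eps.
  rewrite /ftilde /m.
  have h1 := ler_sum (index_enum 'I_n) (fun i _ => hterm i).
  have ni : (0 : R) <= n%:R^-1 by rewrite invr_ge0 ler0n.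
  apply: le_trans (ler_wpM2l ni (h1 predT)) _.
  rewrite big_split /= mulrDr lerD2l.
  have : n%:R^-1 * (\sum_i L i / 2 * (B ^+ 2 * D)) = B ^+ 2 * D * Lhat L / 2.
    rewrite /Lhat -!mulr_suml. move: (\sum_(i < n) L i) (B ^+ 2 * D) => T U; field; rewrite ?nR //.
  move=> ->; lra.
apply: le_trans (leeB (lexx _) hlow) _.
by rewrite -EFinB lee_fin lerBlDl.
Qed.
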